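(* Let $\alpha=0$ (so $f=z^2$) and let $P$ be a nonzero graded right ideal of $A$ with structure constants $\{c_i\}$. Then $P$ is projective if and only if $c_n\neq\sigma^n(z)$ for every $n\in\mathbb{Z}$.
   Context: $\Bbbk$ algebraically closed of characteristic $0$; $\sigma(z)=z+1$. $A=A(z^2)$ generated by $\Bbbk[z],x,y$ with $xz=(z+1)x$, $yz=(z-1)y$, $xy=z^2$, $yx=(z-1)^2$, graded by $\deg x=1,\deg y=-1,\deg z=0$. $Q_{\mathrm{gr}}(A)=\Bbbk(z)[x,x^{-1};\sigma]$ is the graded quotient ring. Any finitely generated graded right submodule $I\subseteq Q_{\mathrm{gr}}(A)$ has the form $\bigoplus_i\Bbbk[z]a_ix^i$ with $a_i\in\Bbbk(z)^\times$; its structure constants are $c_i=a_ia_{i+1}^{-1}$ normalized monic, each lying in $\{1,\sigma^i(z),\sigma^i(z)^2\}$. *)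

(* Defs.v *)
From HB Require Import structures.
From mathcomp Require Import all_boot all_order all_algebra.
From Stdlib Require Import ClassicalEpsilon.
Set Implicit Arguments. Unset Strict Implicit. Unset Printing Implicit Defensive.
Import Order.TTheory GRing.Theory Num.Theory.
Local Open Scope ring_scope.

(* The ring Q = k[z][x, x^{-1}; sigma] (the polynomial-coefficient part of
   Q_gr(A) = k(z)[x,x^{-1};sigma]), with sigma(z) = z+1.  An element
   sum_i f_i x^i is represented by its coefficient function f : int -> k[z]
   (only finitely supported functions are meaningful). *)
Section Q.
Variable K : fieldType.

Definition Qel := int -> {poly K}.

Definition shift (i : int) (p : {poly K}) : {poly K} := p \Po ('X + (i%:~R)%:P).

Definition fbounded (f : Qel) (N : nat) : Prop :=
  forall i : int, (N < absz i)%N -> f i = 0.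

Definition finsupp (f : Qel) : Prop := exists N, fbounded f N.

(* some bound for the support of f (any bound works, chosen classically) *)
Definition bnd (f : Qel) : nat := epsilon (inhabits 0%N) (fbounded f).

Definition mono (i : int) (p : {poly K}) : Qel := fun n => if n == i then p else 0.

Definition addQ (f g : Qel) : Qel := fun n => f n + g n.

(* (sum_i f_i x^i)(sum_j g_j x^j) = sum_n (sum_i f_i sigma^i(g_{n-i})) x^n *)
Definition mulQ (f g : Qel) : Qel := fun n =>
  let B := bnd f in
  \sum_(k < B.*2.+1) f (k%:Z - B%:Z) * shift (k%:Z - B%:Z) (g (n - (k%:Z - B%:Z))).

Definition oneQ : Qel := mono 0 1.
Definition zQ : Qel := mono 0 'X.
Definition xQ : Qel := mono 1 1.
(* y = (z-1)^2 x^{-1}, so that x y = z^2 and y x = (z-1)^2 *)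
Definition yQ : Qel := mono (-1) (('X - 1) ^+ 2).

Inductive inA : Qel -> Prop :=
| inA_const p : inA (mono 0 p)
| inA_x : inA xQ
| inA_y : inA yQ
| inA_add f g : inA f -> inA g -> inA (addQ f g)
| inA_mul f g : inA f -> inA g -> inA (mulQ f g).

(* the graded subspace  P = (+)_i k[z] a_i x^i  of Q *)
Definition inP (a : int -> {poly K}) (f : Qel) : Prop :=
  finsupp f /\ forall i, exists r : {poly K}, f i = r * a i.

Record rmodule := RModule {
  rm_car :> zmodType;
  rm_act : rm_car -> Qel -> rm_car;
  rm_actDl : forall m m' b, inA b -> rm_act (m + m') b = rm_act m b + rm_act m' b;
  rm_actDr : forall m b c, inA b -> inA c ->
      rm_act m (addQ b c) = rm_act m b + rm_act m c;
  rm_actM : forall m b c, inA b -> inA c -> rm_act m (mulQ b c) = rm_act (rm_act m b) c;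
  rm_act1 : forall m, rm_act m oneQ = m
}.

Definition is_hom (M N : rmodule) (h : M -> N) : Prop :=
  (forall m m', h (m + m') = h m + h m') /\
  (forall m b, inA b -> h (rm_act m b) = rm_act (h m) b).

(* A-module homomorphisms P -> N, P the right ideal (+)_i k[z] a_i x^i
   (a function on Q, only its values on P matter) *)
Definition is_Phom (a : int -> {poly K}) (N : rmodule) (g : Qel -> N) : Prop :=
  (forall p q, inP a p -> inP a q -> g (addQ p q) = g p + g q) /\
  (forall p b, inP a p -> inA b -> g (mulQ p b) = rm_act (g p) b).

Definition projectiveP (a : int -> {poly K}) : Prop :=
  forall (M N : rmodule) (pi : M -> N), is_hom pi -> (forall n, exists m, pi m = n) ->
  forall g : Qel -> N, is_Phom a g ->
  exists h : Qel -> M, is_Phom a h /\ forall p, inP a p -> pi (h p) = g p.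

End Q.

(* Main.v *)
Require Import Defs.
From HB Require Import structures.
From mathcomp Require Import all_boot all_order all_algebra.
From mathcomp Require Import zify ring.
From Stdlib Require Import ClassicalEpsilon FunctionalExtensionality Classical.
Set Implicit Arguments. Unset Strict Implicit. Unset Printing Implicit Defensive.
Import Order.TTheory GRing.Theory Num.Theory.
Local Open Scope ring_scope.

Section A.
Variable K : fieldType.
Local Notation Qel := (Qel K).
Local Notation shift := (@shift K).
Local Notation mulQ := (@mulQ K).
Local Notation mono := (@mono K).
Local Notation addQ := (@addQ K).

Definition wl (N : nat) : seq int := [seq (k%:Z - N%:Z) | k <- iota 0 N.*2.+1].

Lemma mem_wl N i : (i \in wl N) = (absz i <= N)%N.
Proof.
apply/mapP/idP.
  by move=> [k]; rewrite mem_iota => /andP [_ Hk] ->; lia.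
move=> Hi; exists (absz (i + N%:Z)); last by lia.
rewrite mem_iota; lia.
Qed.

Lemma uniq_wl N : uniq (wl N).
Proof.
rewrite map_inj_uniq ?iota_uniq // => x y /addIr [].

done.
Qed.

Lemma bndP (f : Qel) : finsupp f -> fbounded f (bnd f).
Proof. by move=> H; rewrite /bnd; apply: epsilon_spec. Qed.

Lemma mulQ_wl (f g : Qel) n :
  mulQ f g n = \sum_(i <- wl (bnd f)) f i * shift i (g (n - i)).
Proof.
rewrite /mulQ /wl big_map.
rewrite -(big_mkord xpredT (fun k => f (k%:Z - (bnd f)%:Z) * shift (k%:Z - (bnd f)%:Z) (g (n - (k%:Z - (bnd f)%:Z))))).
by rewrite /index_iota subn0.
Qed.

Lemma sum_supp (R : zmodType) (s1 s2 : seq int) (F : int -> R) :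
  uniq s1 -> uniq s2 -> (forall i, F i != 0 -> (i \in s1) && (i \in s2)) ->
  \sum_(i <- s1) F i = \sum_(i <- s2) F i.
Proof.
move=> u1 u2 HF.
have E (s t : seq int) : (forall i, F i != 0 -> i \in t) ->
    \sum_(i <- s) F i = \sum_(i <- s | i \in t) F i.
  move=> Ht; rewrite [LHS](bigID (mem t)) /=.
  have -> : \sum_(i <- s | i \notin t) F i = 0.
    apply: big1 => i Hi; apply/eqP; apply: contraNT Hi => /Ht ->; done.
  by rewrite addr0.
rewrite (E s1 s2); last by move=> i /HF /andP [].
rewrite (E s2 s1); last by move=> i /HF /andP [].
rewrite -big_filter -[RHS]big_filter; apply: perm_big; apply: uniq_perm; rewrite ?filter_uniq //.
by move=> i; rewrite !mem_filter andbC.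
Qed.

Definition supp_in (f : Qel) (s : seq int) := forall i, f i != 0 -> i \in s.

Lemma mulQE (f g : Qel) s n : finsupp f -> uniq s -> supp_in f s ->
  mulQ f g n = \sum_(i <- s) f i * shift i (g (n - i)).
Proof.
move=> fs us sf; rewrite mulQ_wl; apply: sum_supp => //; first exact: uniq_wl.
move=> i Hi; have fi : f i != 0 by apply: contraNneq Hi => ->; rewrite mul0r.
rewrite sf // andbT mem_wl; rewrite leqNgt; apply/negP => H.
by move: fi; rewrite (bndP fs H) eqxx.
Qed.

Lemma finsupp_mono i p : finsupp (mono i p).
Proof.
exists (absz i) => j Hj; rewrite /mono; case: eqP => // E; move: Hj; rewrite E; lia.
Qed.

Lemma supp_mono i p : supp_in (mono i p) [:: i].
Proof. by move=> j; rewrite /mono inE; case: (j =P i) => //; rewrite eqxx. Qed.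

Lemma mulQ_mono i p (g : Qel) n : mulQ (mono i p) g n = p * shift i (g (n - i)).
Proof.
rewrite (mulQE (s := [:: i]) _ _ (finsupp_mono i p)) //; last exact: supp_mono.
by rewrite big_seq1 /mono eqxx.
Qed.

End A.


Section B.
Variable K : fieldType.
Local Notation Qel := (Qel K).
Local Notation shift := (@shift K).
Local Notation mulQ := (@mulQ K).
Local Notation mono := (@mono K).
Local Notation addQ := (@addQ K).
Local Notation inA := (@inA K).

Lemma shift0 p : shift 0 p = p.
Proof. by rewrite /shift polyC0 addr0 comp_polyXr. Qed.

Lemma shiftS i j p : shift i (shift j p) = shift (i + j) p.
Proof.
rewrite /shift -comp_polyA comp_polyD comp_polyX comp_polyC.
by rewrite -addrA -polyCD -intrD addrC.
Qed.

Lemma shiftK i p : shift (- i) (shift i p) = p.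
Proof. by rewrite shiftS addNr shift0. Qed.

Lemma shiftD i p q : shift i (p + q) = shift i p + shift i q.
Proof. exact: comp_polyD. Qed.
Lemma shiftM i p q : shift i (p * q) = shift i p * shift i q.
Proof. exact: comp_polyM. Qed.
Lemma shiftC i c : shift i c%:P = c%:P.
Proof. exact: comp_polyC. Qed.
Lemma shift_0 i : shift i 0 = 0.
Proof. by rewrite -polyC0 shiftC. Qed.
Lemma shift_1 i : shift i 1 = 1.
Proof. by rewrite -polyC1 shiftC. Qed.
Lemma shiftX i : shift i 'X = 'X + (i%:~R)%:P.
Proof. exact: comp_polyX. Qed.
Lemma shiftN i p : shift i (- p) = - shift i p.
Proof. by rewrite -mulN1r shiftM -polyCN shiftC polyCN mulN1r. Qed.
Lemma shiftB i p q : shift i (p - q) = shift i p - shift i q.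
Proof. by rewrite shiftD shiftN. Qed.
Lemma shift_exp i p n : shift i (p ^+ n) = shift i p ^+ n.
Proof. by elim: n => [|n IH]; rewrite ?expr0 ?shift_1 // !exprS shiftM IH. Qed.
Lemma shift_sum I (s : seq I) (F : I -> {poly K}) i :
  shift i (\sum_(j <- s) F j) = \sum_(j <- s) shift i (F j).
Proof.
elim: s => [|x s IH]; first by rewrite !big_nil shift_0.
by rewrite !big_cons shiftD IH.
Qed.
Lemma shift_prod (N : nat) (F : 'I_N -> {poly K}) i :
  shift i (\prod_(j < N) F j) = \prod_(j < N) shift i (F j).
Proof.
elim: N F => [|N IH] F; first by rewrite !big_ord0 shift_1.
by rewrite !big_ord_recr shiftM IH.
Qed.
Lemma horner_shift i p x : (shift i p).[x] = p.[x + i%:~R].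
Proof. by rewrite /shift horner_comp hornerD hornerX hornerC. Qed.
Lemma shift_eq0 i p : (shift i p == 0) = (p == 0).
Proof.
apply/eqP/eqP => [H|->]; last exact: shift_0.
by rewrite -(shiftK i p) H shift_0.
Qed.
Lemma shift_dvdp i p q : p %| q -> shift i p %| shift i q.
Proof. by move=> /dvdpP [r ->]; rewrite shiftM dvdp_mull. Qed.

Lemma finsupp_add (f g : Qel) : finsupp f -> finsupp g -> finsupp (addQ f g).
Proof.
move=> [N1 H1] [N2 H2]; exists (maxn N1 N2) => i Hi.
rewrite /addQ H1 ?H2 ?addr0 //; lia.
Qed.

Lemma mulQ_wlN (f g : Qel) N n : finsupp f -> fbounded f N ->
  mulQ f g n = \sum_(i <- wl N) f i * shift i (g (n - i)).
Proof.
move=> fs fN; apply: mulQE => //; first exact: uniq_wl.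
move=> i; rewrite mem_wl leqNgt; apply: contraNN => H; rewrite fN //.
Qed.

Lemma finsupp_mul (f g : Qel) : finsupp f -> finsupp g -> finsupp (mulQ f g).
Proof.
move=> fs [N2 H2]; have [N1 H1] := fs; exists (N1 + N2)%N => n Hn.
rewrite (mulQ_wlN g n fs H1) big1 // => i _.
case: (leqP (absz i) N1) => Hi; last by rewrite H1 // mul0r.
by rewrite H2 ?shift_0 ?mulr0 //; lia.
Qed.

Lemma sumE (s : seq int) (F : int -> {poly K}) n :
  \sum_(i <- s) mono i (F i) n = \sum_(i <- s | i == n) F i.
Proof. by rewrite [RHS]big_mkcond; apply: eq_bigr => i _; rewrite /mono eq_sym. Qed.

End B.


Section C.
Variable K : fieldType.
Local Notation Qel := (Qel K).
Local Notation shift := (@shift K).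
Local Notation mulQ := (@mulQ K).
Local Notation mono := (@mono K).
Local Notation addQ := (@addQ K).
Local Notation inA := (@inA K).

Definition Wp (a : int) (N : nat) : {poly K} :=
  \prod_(k < N) ('X + ((a + k%:Z)%:~R)%:P) ^+ 2.
Definition alpha (l : int) : {poly K} := if (l < 0) then Wp l (absz l) else 1.

Lemma Wp0 a : Wp a 0 = 1.
Proof. by rewrite /Wp big_ord0. Qed.
Lemma Wp1 a : Wp a 1 = ('X + (a%:~R)%:P) ^+ 2.
Proof. by rewrite /Wp big_ord1 addr0. Qed.
Lemma Wp_add a N M : Wp a (N + M) = Wp a N * Wp (a + N%:Z) M.
Proof.
rewrite /Wp big_split_ord; congr (_ * _); apply: eq_bigr => i _ /=.
by rewrite PoszD addrA.
Qed.
Lemma shift_Wp i a N : shift i (Wp a N) = Wp (a + i) N.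
Proof.
rewrite /Wp shift_prod; apply: eq_bigr => k _.
rewrite shift_exp shiftD shiftX shiftC -addrA -polyCD -intrD.
by congr (('X + (_ %:~R)%:P) ^+ 2); ring.
Qed.
Lemma XaC_monic (c : K) : ('X + c%:P) ^+ 2 \is monic.
Proof. by rewrite monic_exp // monicXaddC. Qed.
Lemma size_XaC (c : K) : size (('X + c%:P) ^+ 2) = 3%N.
Proof. by rewrite -[c%:P]opprK -polyCN size_exp_XsubC. Qed.
Lemma Wp_monic a N : Wp a N \is monic.
Proof. by apply: monic_prod => i _; apply: XaC_monic. Qed.
Lemma Wp_neq0 a N : Wp a N != 0.
Proof. exact: monic_neq0 (Wp_monic a N). Qed.
Lemma size_Wp a N : size (Wp a N) = (N.*2).+1.
Proof.
elim: N => [|N IH]; first by rewrite Wp0 size_poly1.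
rewrite -addn1 Wp_add Wp1 size_Mmonic ?Wp_neq0 ?XaC_monic // IH size_XaC; lia.

Qed.

Lemma alpha_ge0 l : 0 <= l -> alpha l = 1.
Proof. by rewrite /alpha ltNge => ->. Qed.
Lemma alpha_lt0 l : l < 0 -> alpha l = Wp l (absz l).
Proof. by rewrite /alpha => ->. Qed.

Lemma alpha_root l (s : int) : 0 < s -> s <= - l -> (alpha l).[s%:~R] = 0.
Proof.
move=> s0 sl; rewrite alpha_lt0; last by lia.
have E : absz l = (absz (- l - s) + (1 + absz (s - 1)))%N by lia.
rewrite E !Wp_add !hornerM Wp1 horner_exp hornerD hornerX hornerC.
have -> : (l + (absz (- l - s))%:Z) = - s by lia.
by rewrite mulrNz subrr expr0n mul0r mulr0.
Qed.

Lemma dvdp_Wp_add a N M : Wp a N %| Wp a (N + M).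
Proof. by rewrite Wp_add dvdp_mulr. Qed.

Lemma alpha_mul i j : alpha (i + j) %| alpha i * shift i (alpha j).
Proof.
case: (ltP i 0) => Hi; case: (ltP j 0) => Hj.
- rewrite !alpha_lt0 ?shift_Wp; try lia.
  have E : absz (i + j) = (absz j + absz i)%N by lia.
  rewrite E Wp_add mulrC (addrC j i).
  have -> : i + j + (absz j)%:Z = i by lia.
  done.
- rewrite (alpha_ge0 Hj) shift_1 mulr1 (alpha_lt0 Hi).
  case: (ltP (i + j) 0) => Hij; last by rewrite alpha_ge0 // dvd1p.
  rewrite alpha_lt0 //.
  have E : absz i = (absz j + absz (i + j)%R)%N by lia.
  rewrite E Wp_add.
  have -> : i + (absz j)%:Z = i + j by lia.
  by rewrite dvdp_mull.
- rewrite (alpha_ge0 Hi) mul1r (alpha_lt0 Hj) shift_Wp.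
  case: (ltP (i + j) 0) => Hij; last by rewrite alpha_ge0 // dvd1p.
  rewrite alpha_lt0 //.
  have E : absz j = (absz (i + j)%R + absz i)%N by lia.
  rewrite E Wp_add (addrC j i) dvdp_mulr //.
- by rewrite alpha_ge0 ?dvd1p //; lia.
Qed.

Lemma shift_alpha i m :
  shift i (alpha (m - i)) = if m < i then Wp m (absz (i - m)) else 1.
Proof.
case: ltP => H.
  rewrite alpha_lt0 ?shift_Wp; last by lia.
  have -> : m - i + i = m by ring.
  by congr Wp; lia.
by rewrite alpha_ge0 ?shift_1 //; lia.
Qed.

Lemma dvdp_sum I (s : seq I) (F : I -> {poly K}) (d : {poly K}) :
  (forall i, d %| F i) -> d %| \sum_(i <- s) F i.
Proof.
move=> H; elim: s => [|x s IH]; first by rewrite big_nil dvdp0.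
by rewrite big_cons dvdp_add.
Qed.

Definition Adiv (f : Qel) := finsupp f /\ forall l, alpha l %| f l.

Lemma Adiv_mul f g : Adiv f -> Adiv g -> Adiv (mulQ f g).
Proof.
move=> [ff Hf] [fg Hg]; split; first exact: finsupp_mul.
move=> l; rewrite mulQ_wl; apply: dvdp_sum => i.
have /dvdpP [r1 ->] := Hf i; have /dvdpP [r2 ->] := Hg (l - i).
rewrite shiftM mulrACA dvdp_mull //.
have := alpha_mul i (l - i); rewrite addrC subrK //.
Qed.

Lemma inA_Adiv f : inA f -> Adiv f.
Proof.
elim => {f}.
- move=> p; split; first exact: finsupp_mono.
  move=> l; rewrite /mono; case E: (_ == _); last by rewrite dvdp0.
  move/eqP: E => ->.
  by rewrite alpha_ge0 ?dvd1p.
- split; first exact: finsupp_mono.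
  move=> l; rewrite /xQ /mono; case E: (_ == _); last by rewrite dvdp0.
  move/eqP: E => ->.
  by rewrite alpha_ge0 ?dvd1p.
- split; first exact: finsupp_mono.
  move=> l; rewrite /yQ /mono; case E: (_ == _); last by rewrite dvdp0.
  move/eqP: E => ->.
  rewrite alpha_lt0 // Wp1.
  suff -> : ('X + ((-1 : int)%:~R : K)%:P) = 'X - 1 by [].
  by rewrite mulrN1z polyCN.
- move=> f g _ [ff Hf] _ [fg Hg]; split; first exact: finsupp_add.
  by move=> l; rewrite /addQ dvdp_add.
- by move=> f g _ Hf _ Hg; apply: Adiv_mul.
Qed.

End C.


Section D.
Variable K : fieldType.
Local Notation Qel := (Qel K).
Local Notation shift := (@shift K).
Local Notation mulQ := (@mulQ K).
Local Notation mono := (@mono K).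
Local Notation addQ := (@addQ K).
Local Notation inA := (@inA K).
Local Notation alpha := (@alpha K).
Local Notation Wp := (@Wp K).

Lemma mono_mul i j p q : mulQ (mono i p) (mono j q) = mono (i + j) (p * shift i q).
Proof.
apply: functional_extensionality => n; rewrite mulQ_mono /mono.
have -> : (n - i == j) = (n == i + j).
  by apply/eqP/eqP => H; lia.
by case: (_ == _); rewrite ?shift_0 ?mulr0.
Qed.

Lemma alpha_neg_add i j : i < 0 -> j < 0 -> alpha (i + j) = alpha i * shift i (alpha j).
Proof.
move=> Hi Hj; rewrite !alpha_lt0 ?shift_Wp; try lia.
have E : absz (i + j) = (absz j + absz i)%N by lia.
rewrite E Wp_add mulrC (addrC j i).
have -> : i + j + (absz j)%:Z = i by lia.
done.
Qed.

Lemma alpha_m1 : alpha (-1) = ('X - 1) ^+ 2.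
Proof.
rewrite alpha_lt0 // Wp1.
suff -> : ('X + ((-1 : int)%:~R : K)%:P) = 'X - 1 by [].
by rewrite mulrN1z polyCN.
Qed.

Lemma inA_xpow_nat (n : nat) : inA (mono n (alpha n)) /\ inA (mono (- n%:Z) (alpha (- n%:Z))).
Proof.
elim: n => [|n [IH1 IH2]]; first by split; apply: inA_const.
split.
  have -> : mono n.+1 (alpha n.+1) = mulQ (mono n (alpha n)) (xQ K).
    rewrite /xQ mono_mul !alpha_ge0 // shift_1 mulr1.
    by congr mono; lia.
  exact: inA_mul IH1 (inA_x K).
case: n IH1 IH2 => [|n] IH1 IH2.
  by have := inA_y K; rewrite /yQ -alpha_m1.
have -> : mono (- n.+2%:Z) (alpha (- n.+2%:Z)) = mulQ (mono (- n.+1%:Z) (alpha (- n.+1%:Z))) (yQ K).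
  rewrite /yQ -alpha_m1 mono_mul -alpha_neg_add //.
  by have -> : - n.+1%:Z + -1 = - n.+2%:Z by lia.
exact: inA_mul IH2 (inA_y K).
Qed.

Lemma inA_xpow i : inA (mono i (alpha i)).
Proof.
case: (ltP i 0) => Hi.
  have -> : i = - (absz i)%:Z by lia.
  by case: (inA_xpow_nat (absz i)).
have -> : i = (absz i)%:Z by lia.
by case: (inA_xpow_nat (absz i)).
Qed.

Lemma inA_mono_alpha i r : inA (mono i (r * alpha i)).
Proof.
have -> : mono i (r * alpha i) = mulQ (mono 0 r) (mono i (alpha i)).
  by rewrite mono_mul shift0 add0r.
apply: inA_mul; [exact: inA_const | exact: inA_xpow].
Qed.

Definition sumQ (s : seq int) (F : int -> Qel) : Qel :=
  foldr (fun i acc => addQ (F i) acc) (mono 0 0) s.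

Lemma inA_sumQ s F : (forall i, inA (F i)) -> inA (sumQ s F).
Proof.
move=> H; elim: s => [|x s IH]; first exact: inA_const.
exact: inA_add.
Qed.

Lemma sumQE s F n : sumQ s F n = \sum_(i <- s) F i n.
Proof.
elim: s => [|x s IH]; first by rewrite big_nil /= /mono; case: (_ == _).
by rewrite big_cons /= /addQ IH.
Qed.

Lemma sum_pick (R : zmodType) (s : seq int) (F : int -> R) n : uniq s ->
  \sum_(i <- s | i == n) F i = if n \in s then F n else 0.
Proof.
move=> us; case: ifP => Hn.
  by rewrite -big_filter filter_pred1_uniq // big_seq1.
rewrite big_seq_cond big1 // => i /andP [Hi /eqP Ein].
by move: Hn; rewrite -Ein Hi.
Qed.

Lemma Adiv_inA f : Adiv f -> inA f.
Proof.
move=> [[N HN] Hf].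
have -> : f = sumQ (wl N) (fun i => mono i (f i)).
  apply: functional_extensionality => n; rewrite sumQE sumE sum_pick ?uniq_wl //.
  rewrite mem_wl; case: leqP => // H; by rewrite HN.
apply: inA_sumQ => i; have /dvdpP [r ->] := Hf i; exact: inA_mono_alpha.
Qed.

End D.


Section E.
Variable K : closedFieldType.
Hypothesis hK : [pchar K] =i pred0.
Variable a : int -> {poly K}.
Hypothesis ha : forall i, a i != 0.
Hypothesis hPA : forall f, inP a f -> inA f.
Hypothesis hPr : forall f b, inP a f -> inA b -> inP a (mulQ f b).

Local Notation Qel := (Qel K).
Local Notation shift := (@shift K).
Local Notation mulQ := (@mulQ K).
Local Notation mono := (@mono K).
Local Notation addQ := (@addQ K).
Local Notation inA := (@inA K).
Local Notation alpha := (@alpha K).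
Local Notation Wp := (@Wp K).

Lemma intrK_eq0 (z : int) : ((z%:~R : K) == 0) = (z == 0).
Proof.
have H0 := (pcharf0P K).1 hK.
case: z => n; first by rewrite H0.
by rewrite NegzE mulrNz oppr_eq0 H0.
Qed.

Lemma intrK_inj (z w : int) : (z%:~R : K) = w%:~R -> z = w.
Proof.
move=> /eqP; rewrite -subr_eq0 -intrB intrK_eq0 subr_eq0 => /eqP //.
Qed.

Lemma inP_mono n : inP a (mono n (a n)).
Proof.
split; first exact: finsupp_mono.
move=> i; rewrite /mono; case E: (_ == _).
  by exists 1; rewrite mul1r; move/eqP: E => ->.
by exists 0; rewrite mul0r.
Qed.

Lemma F1 n : a (n + 1) %| a n.
Proof.
have [_ H] := hPr (inP_mono n) (inA_x K).
have [r Hr] := H (n + 1).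
move: Hr; rewrite mulQ_mono /xQ /mono.
have -> : (n + 1 - n == 1) = true by apply/eqP; ring.
rewrite shift_1 mulr1 => ->; exact: dvdp_mull.
Qed.

Lemma shift_Xm1 n : shift (n + 1) ('X - 1) = 'X + (n%:~R)%:P.
Proof.
rewrite shiftB shiftX shift_1 intrD polyCD -addrA; congr (_ + _).
by rewrite polyC1 addrK.
Qed.

Lemma F2 n : a n %| a (n + 1) * ('X + (n%:~R)%:P) ^+ 2.
Proof.
have [_ H] := hPr (inP_mono (n + 1)) (inA_y K).
have [r Hr] := H n.
move: Hr; rewrite mulQ_mono /yQ /mono.
have -> : (n - (n + 1) == -1) = true by apply/eqP; ring.
rewrite shift_exp shift_Xm1 => ->; exact: dvdp_mull.
Qed.

Lemma Adiv_a m : alpha m %| a m.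
Proof.
have [_ H] := inA_Adiv (hPA (inP_mono m)).
by have := H m; rewrite /mono eqxx.
Qed.

Lemma C1 m (N : nat) : a (m + N%:Z) %| a m.
Proof.
elim: N => [|N IH]; first by rewrite addr0 dvdpp.
apply: dvdp_trans IH; have := F1 (m + N%:Z).
by have -> : m + N%:Z + 1 = m + N.+1%:Z by lia.
Qed.

Lemma C1' m k : m <= k -> a k %| a m.
Proof. move=> H; have := C1 m (absz (k - m)); by have -> : m + (absz (k - m))%:Z = k by lia. Qed.

Lemma C2 m (N : nat) : a m %| a (m + N%:Z) * Wp m N.
Proof.
elim: N => [|N IH]; first by rewrite Wp0 mulr1 addr0 dvdpp.
apply: (dvdp_trans IH).
rewrite -addn1 Wp_add Wp1 mulrA mulrAC.
rewrite dvdp_mul2r ?Wp_neq0 //.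
have := F2 (m + N%:Z).
by have -> : m + N%:Z + 1 = m + (N + 1)%N%:Z by lia.
Qed.

Lemma dvdp_div_root (p q : {poly K}) (x : K) : p %| q -> p != 0 -> root q x = root p x || root (q %/ p) x.
Proof.
move=> /divpK Hq p0; by rewrite -{1}Hq rootM orbC.
Qed.

End E.


Section F.
Variable K : closedFieldType.
Hypothesis hK : [pchar K] =i pred0.
Variable a : int -> {poly K}.
Hypothesis ha : forall i, a i != 0.
Hypothesis hPA : forall f, inP a f -> inA f.
Hypothesis hPr : forall f b, inP a f -> inA b -> inP a (mulQ f b).
Hypothesis hnl : forall n : int, ~ exists c : K, a n = c *: (('X + (n%:~R)%:P) * a (n + 1)).

Local Notation Qel := (Qel K).
Local Notation shift := (@shift K).
Local Notation mulQ := (@mulQ K).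
Local Notation mono := (@mono K).
Local Notation addQ := (@addQ K).
Local Notation inA := (@inA K).
Local Notation alpha := (@alpha K).
Local Notation Wp := (@Wp K).

Lemma XaC_XsubC (c : K) : 'X + c%:P = 'X - (- c)%:P.
Proof. by rewrite polyCN opprK. Qed.

Lemma factor k : exists2 g : K, g != 0 &
  (a k = g *: a (k + 1) \/ a k = g *: (('X + (k%:~R)%:P) ^+ 2 * a (k + 1))).
Proof.
have /dvdpP [c Hc] := F1 hPr k.
have c0 : c != 0 by apply: contraNneq (ha k) => E; rewrite Hc E mul0r.
have Hd : c %| ('X + (k%:~R)%:P) ^+ 2.
  by move: (F2 hPr k); rewrite {1}Hc [c * _]mulrC dvdp_mul2l ?ha.
have [rs Hrs] := closed_field_poly_normal c.
have l0 : lead_coef c != 0 by rewrite lead_coef_eq0.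
have Hroots : forall z, z \in rs -> z = - k%:~R.
  move=> z zin; have : root c z by rewrite Hrs rootZ // root_prod_XsubC.
  move=> /(root_dvdp Hd); rewrite rootE horner_exp hornerD hornerX hornerC.
  by rewrite expf_eq0 /= addr_eq0 => /eqP.
have Hprod : forall s : seq K, (forall z, z \in s -> z = - k%:~R) ->
    \prod_(z <- s) ('X - z%:P) = ('X + (k%:~R)%:P) ^+ size s.
  elim => [|x s IH] Hr; first by rewrite big_nil expr0.
  rewrite big_cons IH; last by move=> z zin; apply: Hr; rewrite inE zin orbT.
  by rewrite (Hr x) ?mem_head // polyCN opprK exprS.
rewrite (Hprod rs Hroots) in Hrs.
have Hs : size c = (size rs).+1 by rewrite Hrs size_scale // XaC_XsubC size_exp_XsubC.
have Hs3 : (size c <= 3)%N.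
  by have := dvdp_leq (expf_neq0 2 (monic_neq0 (monicXaddC (k%:~R : K)))) Hd; rewrite size_XaC.
exists (lead_coef c) => //.
move: Hrs; case: (size rs) Hs Hs3 => [|[|[|n]]] Hs Hs3 Ec.
- by left; rewrite Hc {1}Ec expr0 -scalerAl mul1r.
- by exfalso; apply: (hnl (n := k)); exists (lead_coef c); rewrite Hc {1}Ec expr1 -scalerAl.
- by right; rewrite Hc {1}Ec -scalerAl.
- by rewrite Hs in Hs3.
Qed.

Lemma size_fact k : size (a k) = size (a (k + 1)) \/ size (a k) = (size (a (k + 1)) + 2)%N.
Proof.
have [g g0 [->|->]] := factor k; first by left; rewrite size_scale.
right; rewrite size_scale // size_mul ?ha ?expf_neq0 ?monic_neq0 ?monicXaddC // size_XaC.
by rewrite add3n addn2.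
Qed.

End F.


Section G.
Variable K : closedFieldType.
Hypothesis hK : [pchar K] =i pred0.
Variable a : int -> {poly K}.
Hypothesis ha : forall i, a i != 0.
Hypothesis hPA : forall f, inP a f -> inA f.
Hypothesis hPr : forall f b, inP a f -> inA b -> inP a (mulQ f b).
Hypothesis hnl : forall n : int, ~ exists c : K, a n = c *: (('X + (n%:~R)%:P) * a (n + 1)).

Local Notation Qel := (Qel K).
Local Notation shift := (@shift K).
Local Notation mulQ := (@mulQ K).
Local Notation mono := (@mono K).
Local Notation addQ := (@addQ K).
Local Notation inA := (@inA K).
Local Notation alpha := (@alpha K).
Local Notation Wp := (@Wp K).

Lemma min_nat (P : nat -> Prop) (f : nat -> nat) t1 : P t1 ->
  exists t0, P t0 /\ forall t, P t -> (f t0 <= f t)%N.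
Proof.
move=> Pt1.
suff H : forall v t, P t -> (f t <= v)%N -> exists t0, P t0 /\ forall t, P t -> (f t0 <= f t)%N.
  exact: (H _ t1 Pt1 (leqnn _)).
elim=> [|v IH] t Pt Ht.
  by exists t; split => // t' _; apply: leq_trans Ht _.
case: (classic (forall t', P t' -> (f t <= f t')%N)) => [H|H]; first by exists t.
have [t' Ht'] := not_all_ex_not _ _ H.
have [Pt' Hlt] : P t' /\ ~ (f t <= f t')%N by tauto.
apply: (IH t' Pt'); move/negP: Hlt; rewrite -ltnNge => Hlt; lia.
Qed.

Lemma exR : exists R, forall m, (size (a R) <= size (a m))%N.
Proof.
have [t0 [_ Ht0]] := @min_nat (fun t => True) (fun t => size (a (if odd t then - (t./2)%:Z - 1 else (t./2)%:Z))) 0 I.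
exists (if odd t0 then - (t0./2)%:Z - 1 else (t0./2)%:Z) => m.
case: (ltP m 0) => Hm.
  have := Ht0 (absz (- m - 1)).*2.+1 I; rewrite /= odd_double /= uphalf_double.
  by have -> : - (absz (- m - 1))%:Z - 1 = m by lia.
have := Ht0 (absz m).*2 I; rewrite odd_double half_double.
by have -> : (absz m)%:Z = m by lia.
Qed.

Lemma R_prop R : (forall m, (size (a R) <= size (a m))%N) -> forall m, R <= m -> a R %| a m.
Proof.
move=> HR m Hm.
have Hd := C1' hPr Hm.
have E : a m %= a R.
  rewrite -dvdp_size_eqp // eqn_leq HR andbT dvdp_leq //.
by rewrite -(eqp_dvdl _ E) dvdpp.
Qed.

Lemma lowb t : (t.*2 < size (a (- t%:Z)))%N.
Proof.
case: t => [|t]; first by rewrite size_poly_gt0.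
have := dvdp_leq (ha _) (Adiv_a hPA (- t.+1%:Z)).
by rewrite alpha_lt0 // size_Wp.
Qed.

Lemma stepb t : (size (a (- t.+1%:Z)) <= size (a (- t%:Z)) + 2)%N.
Proof.
have := size_fact ha hPr hnl (- t.+1%:Z).
have -> : - t.+1%:Z + 1 = - t%:Z by lia.
lia.
Qed.

Lemma exL R : exists L, L <= R /\ forall m, m < L ->
  exists2 g : K, g != 0 & a m = g *: (('X + (m%:~R)%:P) ^+ 2 * a (m + 1)).
Proof.
pose phi t := (size (a (- t%:Z)) - t.*2)%N.
pose T := maxn 1 (absz R).
have [t0 [Tt0 Ht0]] := @min_nat (fun t => (T <= t)%N) phi T (leqnn _).
have mono_phi t : (phi t.+1 <= phi t)%N.
  have := stepb t; have := lowb t; have := lowb t.+1; rewrite /phi; lia.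
have Hc d : phi (t0 + d)%N = phi t0.
  apply/eqP; rewrite eqn_leq Ht0 ?andbT; last by lia.
  elim: d => [|d IH]; first by rewrite addn0.
  by rewrite addnS (leq_trans (mono_phi _)).
exists (- t0%:Z); split; first by lia.
move=> m Hm; pose t := (absz m - 1)%N.
have Et : m = - t.+1%:Z by lia.
have Hs : size (a m) = (size (a (m + 1)) + 2)%N.
  have Ht : (t0 <= t)%N by lia.
  have E1 : phi t = phi t0 by rewrite -(Hc (t - t0)%N) subnKC.
  have E2 : phi t.+1 = phi t0 by rewrite -(Hc (t.+1 - t0)%N) subnKC //; lia.
  have := lowb t; have := lowb t.+1; move: E1 E2; rewrite /phi.
  have -> : m + 1 = - t%:Z by lia.
  rewrite Et; lia.
have [g g0 [E|E]] := factor ha hPr hnl m; last by exists g.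
exfalso; move: Hs; rewrite E size_scale //; set s := size _ => Hs; lia.
Qed.

End G.


Section H.
Variable K : closedFieldType.
Hypothesis hK : [pchar K] =i pred0.
Variable a : int -> {poly K}.
Hypothesis ha : forall i, a i != 0.
Hypothesis hPA : forall f, inP a f -> inA f.
Hypothesis hPr : forall f b, inP a f -> inA b -> inP a (mulQ f b).
Hypothesis hnl : forall n : int, ~ exists c : K, a n = c *: (('X + (n%:~R)%:P) * a (n + 1)).

Local Notation Qel := (Qel K).
Local Notation shift := (@shift K).
Local Notation mulQ := (@mulQ K).
Local Notation mono := (@mono K).
Local Notation addQ := (@addQ K).
Local Notation inA := (@inA K).
Local Notation alpha := (@alpha K).
Local Notation Wp := (@Wp K).

Lemma Wp_coprime a0 N : coprimep (('X + ((a0 + N%:Z)%:~R)%:P) ^+ 2) (Wp a0 N).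
Proof.
rewrite coprimep_pexpl // XaC_XsubC coprimep_sym coprimep_XsubC.
rewrite /root /Wp horner_prod prodf_seq_eq0; apply/hasP => -[i _ /=].
rewrite horner_exp hornerD hornerX hornerC expf_eq0 /=.
have -> : - (a0 + N%:Z)%:~R + (a0 + i%:Z)%:~R = ((i%:Z - N%:Z)%:~R : K).
  by rewrite !intrD ?intrN; ring.
by rewrite (intrK_eq0 hK); have := ltn_ord i; lia.
Qed.

Lemma coprime_build L R (N : nat) : L + N%:Z <= R ->
  exists G H, [/\ G * a (L + N%:Z) = a L, G * H = Wp L N & coprimep G H].
Proof.
elim: N => [|N IH] HN.
  by exists 1, 1; rewrite addr0 mul1r mulr1 Wp0 coprime1p.
have [|G [H [E1 E2 E3]]] := IH; first by lia.
have Hk : L + N%:Z + 1 = L + N.+1%:Z by lia.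
have X0 : ('X + ((L + N%:Z)%:~R)%:P) ^+ 2 != 0 :> {poly K}.
  by rewrite expf_neq0 // monic_neq0 // monicXaddC.
have GW : G %| Wp L N by rewrite -E2 dvdp_mulr.
have HW : H %| Wp L N by rewrite -E2 dvdp_mull.
have cW := Wp_coprime L N.
have WN1 : Wp L N.+1 = Wp L N * ('X + ((L + N%:Z)%:~R)%:P) ^+ 2 by rewrite -addn1 Wp_add Wp1.
have [g g0 [Ek|Ek]] := factor ha hPr hnl (L + N%:Z); rewrite Hk in Ek.
- exists (g *: G), (g^-1 *: (H * ('X + ((L + N%:Z)%:~R)%:P) ^+ 2)); split.
  + by rewrite -scalerAl scalerAr -Ek E1.
  + by rewrite -scalerAl -scalerAr scalerA divff // scale1r mulrA E2 WN1.
  + rewrite coprimepZl // coprimepZr ?invr_eq0 // coprimepMr E3 /=.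
    by rewrite coprimep_sym (coprimep_dvdl GW) // coprimep_sym.
- exists (g *: (G * ('X + ((L + N%:Z)%:~R)%:P) ^+ 2)), (g^-1 *: H); split.
  + by rewrite -scalerAl -mulrA scalerAr -Ek E1.
  + by rewrite -scalerAl -scalerAr scalerA divff // scale1r mulrAC E2 WN1.
  + rewrite coprimepZl // coprimepZr ?invr_eq0 // coprimepMl E3 /=.
    by rewrite (coprimep_dvdl HW).
Qed.

Lemma C4 L : (forall m, m < L ->
    exists2 g : K, g != 0 & a m = g *: (('X + (m%:~R)%:P) ^+ 2 * a (m + 1))) ->
  forall N : nat, a L * Wp (L - N%:Z) N %| a (L - N%:Z).
Proof.
move=> HL; elim=> [|N IH]; first by rewrite subr0 Wp0 mulr1 dvdpp.
have [|g g0 Em] := HL (L - N.+1%:Z); first by lia.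
have E1 : L - N.+1%:Z + 1 = L - N%:Z by lia.
rewrite Em E1 dvdpZr // -add1n Wp_add Wp1 add1n.
have -> : L - N.+1%:Z + 1%:Z = L - N%:Z by lia.
rewrite mulrCA dvdp_mul2l //.
by rewrite expf_neq0 // monic_neq0 // monicXaddC.
Qed.

Lemma dual_data : exists (L R : int) (T1 T2 : {poly K}), [/\ T1 + T2 = 1,
  (forall m : int, a L * shift L (alpha (m - L)) %| T1 * a m) &
  (forall m : int, a R * shift R (alpha (m - R)) %| T2 * a m)].
Proof.
have [R HR] := exR a.
have [L [LR HL]] := exL ha hPA hPr hnl R.
have [G [H [E1 E2 E3]]] := @coprime_build L R (absz (R - L)) ltac:(lia).
have ER : L + (absz (R - L))%:Z = R by lia.
rewrite ER in E1.
have /Bezout_eq1_coprimepP [[u v] /= Huv] := E3.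
have G0 : G != 0 by apply: contraNneq (ha L) => E; rewrite -E1 E mul0r.
have aRm m : R <= m -> a R %| a m by apply: R_prop.
have aRm' (m : int) : m <= R -> a R %| a m.
  by move=> Hm; have := C1' hPr Hm.

exists L, R, (u * G), (v * H); split; first done.
- move=> m; rewrite shift_alpha; case: ltP => Hm.
  + apply: dvdp_trans (dvdp_mull (u * G) (dvdpp (a m))).
    have := C4 HL (absz (L - m)).
    by have -> : L - (absz (L - m))%:Z = m by lia.
  + rewrite mulr1 -E1 -mulrA dvdp_mull // dvdp_mul2l //.
    by case: (leP m R) => HmR; [apply: aRm' | apply: aRm; lia].
- move=> m; rewrite shift_alpha; case: ltP => Hm; last first.
    by rewrite mulr1 dvdp_mull // aRm //; lia.
  rewrite -mulrA dvdp_mull // -(dvdp_mul2l _ _ G0) !mulrA E1 E2.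
  case: (ltP m L) => HmL.
  + have EW : Wp m (absz (R - m)) = Wp m (absz (L - m)) * Wp L (absz (R - L)).
      rewrite (_ : absz (R - m) = (absz (L - m) + absz (R - L))%N); last by lia.
      by rewrite Wp_add; congr (_ * Wp _ _); lia.
    rewrite EW mulrA [X in _ %| X]mulrC dvdp_mul2r ?Wp_neq0 //.
    have := C4 HL (absz (L - m)).
    by have -> : L - (absz (L - m))%:Z = m by lia.
  + have EW : Wp L (absz (R - L)) = Wp L (absz (m - L)) * Wp m (absz (R - m)).
      rewrite (_ : absz (R - L) = (absz (m - L) + absz (R - m))%N); last by lia.
      by rewrite Wp_add; congr (_ * Wp _ _); lia.
    rewrite EW mulrAC dvdp_mul2r ?Wp_neq0 // mulrC.
    have := C2 hPr L (absz (m - L)).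
    by have -> : L + (absz (m - L))%:Z = m by lia.
Qed.

End H.


Section I.
Variable K : fieldType.
Variable a : int -> {poly K}.
Hypothesis ha : forall i, a i != 0.

Local Notation Qel := (Qel K).
Local Notation shift := (@shift K).
Local Notation mulQ := (@mulQ K).
Local Notation mono := (@mono K).
Local Notation addQ := (@addQ K).
Local Notation inA := (@inA K).
Local Notation alpha := (@alpha K).
Local Notation Wp := (@Wp K).

Variable i : int.
Variable T : {poly K}.
Hypothesis HD : forall m : int, a i * shift i (alpha (m - i)) %| T * a m.

Definition phi (p : Qel) : Qel := fun k => shift (- i) ((T * p (k + i)) %/ a i).

Lemma divp_sum I (s : seq I) (F : I -> {poly K}) d :
  (\sum_(j <- s) F j) %/ d = \sum_(j <- s) (F j %/ d).
Proof.
elim: s => [|x s IH]; first by rewrite !big_nil div0p.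
by rewrite !big_cons divpD IH.
Qed.

Lemma phi_add p q : phi (addQ p q) = addQ (phi p) (phi q).
Proof.
by apply: functional_extensionality => k; rewrite /phi /addQ mulrDr divpD shiftD.
Qed.

Lemma HD' m : a i %| T * a m.
Proof. exact: dvdp_trans (dvdp_mulr _ (dvdpp _)) (HD m). Qed.

Lemma HDp p m : inP a p -> a i %| T * p m.
Proof. by move=> [_ Hp]; have [r ->] := Hp m; rewrite mulrCA dvdp_mull // HD'. Qed.

Lemma phi_supp p l : phi p l != 0 -> p (l + i) != 0.
Proof.
by apply: contraNneq => E; rewrite /phi E mulr0 div0p shift_0.
Qed.

Lemma phi_A p : inP a p -> inA (phi p).
Proof.
move=> Hp; have [[N HN] Hp'] := Hp.
apply: Adiv_inA; split.
  exists (N + absz i)%N => k Hk; apply/eqP; apply: contraTT isT => /phi_supp.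
  by rewrite HN ?eqxx //; lia.
move=> k; rewrite /phi; have [r Hr] := Hp' (k + i).
have /dvdpP [q Hq] := HD (k + i).
rewrite Hr mulrCA Hq (_ : k + i - i = k); last by ring.
rewrite [a i * _]mulrC !mulrA mulpK // shiftM shiftK dvdp_mull //.
Qed.

Lemma phi_mul p b : inP a p -> inA b -> phi (mulQ p b) = mulQ (phi p) b.
Proof.
move=> Hp Hb; have [[N HN] _] := Hp; have fp : finsupp p by exists N.
apply: functional_extensionality => k.
rewrite (mulQE (s := [seq l - i | l <- wl N]) _ _ ((inA_Adiv (phi_A Hp)).1)); first last.
- move=> l /phi_supp Hl; apply/mapP; exists (l + i); last by ring.
  by rewrite mem_wl leqNgt; apply: contra Hl => /HN ->.
- by rewrite map_inj_uniq ?uniq_wl // => x y /addIr.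
rewrite big_map /phi (mulQ_wlN _ _ fp HN) mulr_sumr divp_sum shift_sum.
apply: eq_bigr => l _; rewrite mulrA -divp_mulAC; last exact: HDp.
rewrite shiftM shiftS (_ : l - i + i = l); last by ring.
by congr (_ * shift _ (b _)); ring.
Qed.

End I.


Section J.
Variable K : closedFieldType.
Hypothesis hK : [pchar K] =i pred0.
Variable a : int -> {poly K}.
Hypothesis ha : forall i, a i != 0.
Hypothesis hPA : forall f, inP a f -> inA f.
Hypothesis hPr : forall f b, inP a f -> inA b -> inP a (mulQ f b).

Local Notation Qel := (Qel K).
Local Notation shift := (@shift K).
Local Notation mulQ := (@mulQ K).
Local Notation mono := (@mono K).
Local Notation addQ := (@addQ K).
Local Notation inA := (@inA K).
Local Notation alpha := (@alpha K).

Lemma mono_phi i T p k : inP a p -> a i %| T * p k ->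
  mulQ (mono i (a i)) (phi a i T p) k = T * p k.
Proof.
move=> Hp Hd; rewrite mulQ_mono /phi shiftS addrN shift0.
by rewrite (_ : k - i + i = k) ?divpKC //; ring.
Qed.

Lemma proj_dir :
  (forall n : int, ~ exists c : K, a n = c *: (('X + (n%:~R)%:P) * a (n + 1))) ->
  projectiveP a.
Proof.
move=> hnl M N pi [piadd pihom] pisurj g [gadd gmul].
have [L [R [T1 [T2 [HT H1 H2]]]]] := dual_data hK ha hPA hPr hnl.
have [mL HmL] := pisurj (g (mono L (a L))).
have [mR HmR] := pisurj (g (mono R (a R))).
have AL p : inP a p -> inA (phi a L T1 p) by move=> Hp; exact: phi_A.
have AR p : inP a p -> inA (phi a R T2 p) by move=> Hp; exact: phi_A.
exists (fun p => rm_act mL (phi a L T1 p) + rm_act mR (phi a R T2 p)); split; first split.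
- move=> p q Hp Hq; rewrite !phi_add !rm_actDr; try (by apply: AL); try (by apply: AR).
  by rewrite addrACA.
- move=> p b Hp Hb; rewrite !phi_mul // !rm_actM //; try (by apply: AL); try (by apply: AR).
  by rewrite rm_actDl.
- move=> p Hp; rewrite piadd !pihom; try (by apply: AL); try (by apply: AR).
  rewrite HmL HmR -!gmul; try (by apply: AL); try (by apply: AR); try (by apply: inP_mono).
  rewrite -gadd; try (by apply: hPr; [apply: inP_mono | apply: AL]);
    try (by apply: hPr; [apply: inP_mono | apply: AR]).
  congr g; apply: functional_extensionality => k.
  rewrite /addQ !mono_phi //; first by rewrite -mulrDl HT mul1r.
  all: first [exact: (HDp H1 k Hp) | exact: (HDp H2 k Hp)].
Qed.

End J.


From mathcomp Require Import boolp functions.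
Import Order.TTheory GRing.Theory Num.Theory.

Section K.
Variable K : fieldType.
Local Notation Qel := (Qel K).
Local Notation shift := (@shift K).
Local Notation mulQ := (@mulQ K).
Local Notation mono := (@mono K).
Local Notation addQ := (@addQ K).
Local Notation inA := (@inA K).
Local Notation alpha := (@alpha K).

Lemma addfE (T : Type) (M : zmodType) (f g : T -> M) x : (f + g) x = f x + g x.
Proof. by []. Qed.

Definition Mc : zmodType := (int -> {poly K}).

Definition actMc (m : Mc) (b : Qel) : Mc :=
  fun k => \sum_(j <- wl (bnd b)) m (k - j) * shift (k - j) (b j).

Lemma actMcE (m : Mc) (b : Qel) s k : finsupp b -> uniq s -> supp_in b s ->
  actMc m b k = \sum_(j <- s) m (k - j) * shift (k - j) (b j).
Proof.
move=> fs us sf; rewrite /actMc; apply: sum_supp => //; first exact: uniq_wl.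
move=> i Hi; have fi : b i != 0 by apply: contraNneq Hi => ->; rewrite shift_0 mulr0.
rewrite sf // andbT mem_wl; rewrite leqNgt; apply/negP => H.
by move: fi; rewrite (bndP fs H) eqxx.
Qed.

Lemma actMc_Dl m m' b : actMc (m + m') b = actMc m b + actMc m' b.
Proof.
apply: functional_extensionality => k; rewrite addfE /actMc.
by rewrite -big_split /=; apply: eq_bigr => j _; rewrite mulrDl.
Qed.

Lemma actMc_Dr m b c : inA b -> inA c -> actMc m (addQ b c) = actMc m b + actMc m c.
Proof.
move=> /inA_Adiv [[Nb Hb] _] /inA_Adiv [[Nc Hc] _].
have fb : finsupp b by exists Nb.
have fc : finsupp c by exists Nc.
apply: functional_extensionality => k; rewrite addfE.
have sup N f : fbounded f N -> supp_in f (wl N).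
  by move=> HN i; rewrite mem_wl leqNgt; apply: contra => /HN ->.
have HbN : fbounded b (maxn Nb Nc) by move=> i Hi; apply: Hb; lia.
have HcN : fbounded c (maxn Nb Nc) by move=> i Hi; apply: Hc; lia.
have HbcN : fbounded (addQ b c) (maxn Nb Nc) by move=> i Hi; rewrite /addQ HbN ?HcN ?addr0.
rewrite !(@actMcE m _ (wl (maxn Nb Nc)) k) ?uniq_wl //; try exact: finsupp_add; try (apply: sup; assumption).
by rewrite -big_split /=; apply: eq_bigr => j _; rewrite /addQ shiftD mulrDr.
Qed.

Lemma actMc1 m : actMc m (oneQ K) = m.
Proof.
apply: functional_extensionality => k.
rewrite (@actMcE m _ [:: 0] k); [|exact: finsupp_mono|done|exact: supp_mono].
rewrite big_seq1 /oneQ /mono eqxx.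
by rewrite subr0 shift_1 mulr1.
Qed.

Lemma fbounded_mul (f g : Qel) N1 N2 : fbounded f N1 -> fbounded g N2 ->
  fbounded (mulQ f g) (N1 + N2).
Proof.
move=> H1 H2 n Hn; have fs : finsupp f by exists N1.
rewrite (mulQ_wlN g n fs H1) big1 // => i _.
case: (leqP (absz i) N1) => Hi; last by rewrite H1 // mul0r.
by rewrite H2 ?shift_0 ?mulr0 //; lia.
Qed.

Lemma sup_wl (f : Qel) N : fbounded f N -> supp_in f (wl N).
Proof. by move=> HN i; rewrite mem_wl leqNgt; apply: contra => /HN ->. Qed.

Lemma actMc_M m b c : inA b -> inA c -> actMc m (mulQ b c) = actMc (actMc m b) c.
Proof.
move=> /inA_Adiv [[Nb Hb] _] /inA_Adiv [[Nc Hc] _].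
have fb : finsupp b by exists Nb.
have fc : finsupp c by exists Nc.
have Hbc := fbounded_mul Hb Hc.
have fbc : finsupp (mulQ b c) by exists (Nb + Nc)%N.
apply: functional_extensionality => k.
rewrite (@actMcE m _ (wl (Nb + Nc)) k) ?uniq_wl //; last exact: sup_wl.
rewrite (@actMcE _ _ (wl Nc) k) ?uniq_wl //; last exact: sup_wl.
under eq_bigr => i _ do rewrite (mulQ_wlN c i fb Hb) shift_sum mulr_sumr.
have HH l : actMc m b (k - l) = \sum_(j <- wl Nb) m (k - l - j) * shift (k - l - j) (b j).
  by rewrite (@actMcE m _ (wl Nb) (k - l)) ?uniq_wl //; exact: sup_wl.
under [RHS]eq_bigr => l _ do rewrite HH mulr_suml.
rewrite exchange_big [RHS]exchange_big /=.
rewrite big_seq [RHS]big_seq; apply: eq_bigr => j; rewrite mem_wl => Hj.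
transitivity (\sum_(i <- wl (Nb + Nc)) m (k - (i - j) - j) * shift (k - (i - j) - j) (b j) *
    shift (k - (i - j)) (c (i - j))).
  apply: eq_bigr => i _; rewrite shiftM shiftS -mulrA.
  by congr (m _ * (shift _ _ * shift _ (c _))); ring.
rewrite -(big_map (fun i => i - j) xpredT (fun l => m (k - l - j) * shift (k - l - j) (b j) * shift (k - l) (c l))).
apply: sum_supp; first by rewrite map_inj_uniq ?uniq_wl // => x y /addIr.
  exact: uniq_wl.
move=> l Hl; have cl : c l != 0 by apply: contraNneq Hl => ->; rewrite shift_0 mulr0.
have Hl' : (absz l <= Nc)%N by rewrite leqNgt; apply: contra cl => /Hc ->.
rewrite mem_wl Hl' andbT; apply/mapP; exists (l + j); last by ring.
rewrite mem_wl; lia.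
Qed.

End K.


Section L.
Variable K : fieldType.
Local Notation Qel := (Qel K).
Local Notation shift := (@shift K).
Local Notation mulQ := (@mulQ K).
Local Notation mono := (@mono K).
Local Notation addQ := (@addQ K).
Local Notation inA := (@inA K).
Local Notation alpha := (@alpha K).

Definition Ncar : zmodType := (nat -> K).
Definition evz (p : {poly K}) (z : int) : K := p.[z%:~R].

Definition actN (u : Ncar) (b : Qel) : Ncar := fun t =>
  \sum_(j <- wl (bnd b))
    (if 0 <= t%:Z + j then u (absz (t%:Z + j)) * evz (b j) (- (t%:Z + j)) else 0).

Lemma actNE (u : Ncar) (b : Qel) s t : finsupp b -> uniq s -> supp_in b s ->
  actN u b t = \sum_(j <- s)
    (if 0 <= t%:Z + j then u (absz (t%:Z + j)) * evz (b j) (- (t%:Z + j)) else 0).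
Proof.
move=> fs us sf; rewrite /actN; apply: sum_supp => //; first exact: uniq_wl.
move=> i Hi; have fi : b i != 0.
  apply: contraNneq Hi => ->; rewrite /evz horner0 mulr0; by case: ifP.
rewrite sf // andbT mem_wl; rewrite leqNgt; apply/negP => H.
by move: fi; rewrite (bndP fs H) eqxx.
Qed.

Lemma evz_vanish (c : Qel) l (s : int) : inA c -> 0 < s -> s <= - l -> evz (c l) s = 0.
Proof.
move=> /inA_Adiv [_ Hc] s0 sl; have /dvdpP [q ->] := Hc l.
by rewrite /evz hornerM alpha_root // mulr0.
Qed.

Lemma evz_shift i p z : evz (shift i p) z = evz p (z + i).
Proof. by rewrite /evz horner_shift intrD. Qed.

Lemma actN_Dl u u' b : actN (u + u') b = actN u b + actN u' b.
Proof.
apply: functional_extensionality => t; rewrite addfE /actN -big_split /=.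
apply: eq_bigr => j _; case: ifP => _; last by rewrite addr0.
by rewrite addfE mulrDl.
Qed.

Lemma actN_Dr u b c : inA b -> inA c -> actN u (addQ b c) = actN u b + actN u c.
Proof.
move=> /inA_Adiv [[Nb Hb] _] /inA_Adiv [[Nc Hc] _].
have fb : finsupp b by exists Nb.
have fc : finsupp c by exists Nc.
apply: functional_extensionality => t; rewrite addfE.
have HbN : fbounded b (maxn Nb Nc) by move=> i Hi; apply: Hb; lia.
have HcN : fbounded c (maxn Nb Nc) by move=> i Hi; apply: Hc; lia.
have HbcN : fbounded (addQ b c) (maxn Nb Nc) by move=> i Hi; rewrite /addQ HbN ?HcN ?addr0.
rewrite !(@actNE u _ (wl (maxn Nb Nc)) t) ?uniq_wl //; try exact: finsupp_add; try (apply: sup_wl; assumption).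
rewrite -big_split /=; apply: eq_bigr => j _; case: ifP => _; last by rewrite addr0.
by rewrite /addQ /evz hornerD mulrDr.
Qed.

Lemma actN1 u : actN u (oneQ K) = u.
Proof.
apply: functional_extensionality => t.
rewrite (@actNE u _ [:: 0] t); [|exact: finsupp_mono|done|exact: supp_mono].
rewrite big_seq1 /oneQ /mono eqxx addr0 /evz hornerC mulr1.
by have -> : (0 <= t%:Z) = true by [].
Qed.

Lemma actN_M u b c : inA b -> inA c -> actN u (mulQ b c) = actN (actN u b) c.
Proof.
move=> Ab Ac; have [[Nb Hb] _] := inA_Adiv Ab; have [[Nc Hc] _] := inA_Adiv Ac.
have fb : finsupp b by exists Nb.
have fc : finsupp c by exists Nc.
have Hbc := fbounded_mul Hb Hc.
have fbc : finsupp (mulQ b c) by exists (Nb + Nc)%N.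
apply: functional_extensionality => t.
pose H j l := if 0 <= t%:Z + l + j then
   u (absz (t%:Z + l + j)) * evz (b j) (- (t%:Z + l + j)) * evz (c l) (- (t%:Z + l)) else 0.
rewrite (@actNE u _ (wl (Nb + Nc)) t) ?uniq_wl //; last exact: sup_wl.
rewrite (@actNE _ _ (wl Nc) t) ?uniq_wl //; last exact: sup_wl.
transitivity (\sum_(i <- wl (Nb + Nc)) \sum_(j <- wl Nb) H j (i - j)).
  apply: eq_bigr => i _; rewrite (mulQ_wlN c i fb Hb) /evz horner_sum.
  case: ifP => Hti.
    rewrite mulr_sumr; apply: eq_bigr => j _; rewrite /H.
    have -> : t%:Z + (i - j) + j = t%:Z + i by ring.
    rewrite Hti hornerM horner_shift mulrA /evz.
    by congr (_ * _.[_]); rewrite -intrD; congr (_%:~R); ring.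
  rewrite big1 // => j _; rewrite /H.
  have -> : t%:Z + (i - j) + j = t%:Z + i by ring.
  by rewrite Hti.
transitivity (\sum_(l <- wl Nc) \sum_(j <- wl Nb) H j l); last first.
  apply: eq_bigr => l _; case: ifP => Htl.
    rewrite (@actNE u _ (wl Nb) (absz (t%:Z + l))) ?uniq_wl //; last exact: sup_wl.
    rewrite mulr_suml; apply: eq_bigr => j _; rewrite /H.
    have -> : (absz (t%:Z + l))%:Z = t%:Z + l by lia.
    by case: ifP => _; rewrite ?mul0r.
  rewrite big1 // => j _; rewrite /H; case: ifP => // _.
  by rewrite (evz_vanish Ac) ?mulr0 //; lia.
rewrite exchange_big [RHS]exchange_big /=.
rewrite big_seq [RHS]big_seq; apply: eq_bigr => j; rewrite mem_wl => Hj.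
rewrite -(big_map (fun i => i - j) xpredT (fun l => H j l)).
apply: sum_supp; first by rewrite map_inj_uniq ?uniq_wl // => x y /addIr.
  exact: uniq_wl.
move=> l Hl; have cl : c l != 0.
  by apply: contraNneq Hl => E; rewrite /H E /evz horner0 mulr0; case: ifP.
have Hl' : (absz l <= Nc)%N by rewrite leqNgt; apply: contra cl => /Hc ->.
rewrite mem_wl Hl' andbT; apply/mapP; exists (l + j); last by ring.
rewrite mem_wl; lia.
Qed.

End L.


Section M.
Variable K : closedFieldType.
Local Notation Qel := (Qel K).
Local Notation shift := (@shift K).
Local Notation mulQ := (@mulQ K).
Local Notation mono := (@mono K).
Local Notation addQ := (@addQ K).
Local Notation inA := (@inA K).
Local Notation alpha := (@alpha K).
Local Notation evz := (@evz K).
Local Notation Wp := (@Wp K).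

Definition piN (m : Mc K) : Ncar K := fun t => (m (- t%:Z)).[0].

Lemma piN_add m m' : piN (m + m') = piN m + piN m'.
Proof. by apply: functional_extensionality => t; rewrite /piN !addfE hornerD. Qed.

Lemma piN_hom m b : inA b -> piN (actMc m b) = actN (piN m) b.
Proof.
move=> Ab; have [[Nb Hb] _] := inA_Adiv Ab; have fb : finsupp b by exists Nb.
apply: functional_extensionality => t.
rewrite /piN (@actMcE _ m _ (wl Nb)) ?uniq_wl //; last exact: sup_wl.
rewrite (@actNE _ _ _ (wl Nb)) ?uniq_wl //; last exact: sup_wl.
rewrite horner_sum; apply: eq_bigr => j _; rewrite hornerM horner_shift add0r.
case: ifP => Htj.
  have -> : - (absz (t%:Z + j))%:Z = - t%:Z - j by lia.
  by rewrite /evz; congr (_ * _.[_]); congr (_%:~R); ring.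
rewrite (_ : ((- t%:Z - j)%:~R : K) = (- (t%:Z + j))%:~R); last by congr (_%:~R); ring.
by rewrite -/(evz (b j) _) (evz_vanish Ab) ?mulr0 //; lia.
Qed.

Lemma piN_surj u : exists m, piN m = u.
Proof.
exists (fun k : int => if k <= 0 then (u (absz k))%:P else 0).
apply: functional_extensionality => t; rewrite /piN.
have -> : (- t%:Z <= 0) = true by apply/idP; lia.
by rewrite hornerC abszN.
Qed.

Lemma div_dvd (d e x : {poly K}) : d != 0 -> d * e %| x -> e %| x %/ d.
Proof.
move=> d0 /dvdpP [w ->]; rewrite mulrCA mulrC mulpK //.
by rewrite dvdp_mull.
Qed.

Variable a : int -> {poly K}.
Hypothesis ha : forall i, a i != 0.
Hypothesis hPr : forall f b, inP a f -> inA b -> inP a (mulQ f b).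
Variable n : int.
Variable c : K.
Hypothesis Hc : a n = c *: (('X + (n%:~R)%:P) * a (n + 1)).

Definition gN (p : Qel) : Ncar K := fun t => evz ((p (n - t%:Z)) %/ a n) (- n).

Lemma gN_add p q : gN (addQ p q) = gN p + gN q.
Proof.
by apply: functional_extensionality => t; rewrite /gN addfE /addQ divpD /evz hornerD.
Qed.

Lemma c0 : c != 0.
Proof. by apply: contraNneq (ha n) => E; rewrite Hc E scale0r. Qed.

Lemma gN_vanish p b j t : inP a p -> inA b -> t%:Z + j < 0 ->
  evz ((p (n - t%:Z - j) * shift (n - t%:Z - j) (b j)) %/ a n) (- n) = 0.
Proof.
move=> [_ Hp] Ab Htj; set k := n - t%:Z - j.
pose X' : {poly K} := 'X + (n%:~R)%:P.
suff : X' %| (p k * shift k (b j)) %/ a n.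
  move=> /(root_dvdp) H; apply/eqP; apply: H.
  by rewrite rootE /X' hornerD hornerX hornerC -intrD addNr.
apply: div_dvd => //.
have [r Hr] := Hp k.
have [_ HAb] := inA_Adiv Ab; have /dvdpP [q Hq] := HAb j.
pose N := (absz j - t - 1)%N.
have Ej : (absz j = t + (1 + N))%N by lia.
rewrite Hr Hq (@alpha_lt0 K j); last by lia.
rewrite shiftM shift_Wp Ej !Wp_add Wp1.
have -> : j + k + t%:Z = n by rewrite /k; ring.
have -> : n + 1%:Z = n + 1 by [].
have Hk : k = n + 1 + N%:Z by rewrite /k /N; lia.
have HC2 := C2 hPr (n + 1) N; rewrite -Hk in HC2.
rewrite Hc -scalerAl dvdpZl ?c0 // -/X'.
rewrite (_ : r * a k * (shift k q * (Wp (j + k) t * (X' ^+ 2 * Wp (n + 1) N))) =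
   (r * shift k q * Wp (j + k) t) * (X' ^+ 2 * (a k * Wp (n + 1) N))); last by ring.
rewrite (_ : X' * a (n + 1) * X' = X' ^+ 2 * a (n + 1)); last by ring.
by apply: dvdp_mull; apply: dvdp_mul.
Qed.

Lemma gN_mul p b : inP a p -> inA b -> gN (mulQ p b) = actN (gN p) b.
Proof.
move=> Pp Ab; have [[Np HNp] Hp] := Pp; have fp : finsupp p by exists Np.
have [[Nb HNb] _] := inA_Adiv Ab; have fb : finsupp b by exists Nb.
apply: functional_extensionality => t.
rewrite (@actNE _ _ _ (wl Nb)) ?uniq_wl //; last exact: sup_wl.
rewrite /gN (mulQ_wlN b (n - t%:Z) fp HNp).
pose F j := p (n - t%:Z - j) * shift (n - t%:Z - j) (b j).
transitivity (evz ((\sum_(j <- wl Nb) F j) %/ a n) (- n)).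
  congr (evz (_ %/ _) _).
  transitivity (\sum_(l <- wl Np) F (n - t%:Z - l)).
    by apply: eq_bigr => l _; rewrite /F; congr (p _ * shift _ (b _)); ring.
  rewrite -(big_map (fun l => n - t%:Z - l) xpredT F).
  apply: sum_supp; first by rewrite map_inj_uniq ?uniq_wl // => x y /addrI /oppr_inj.
    exact: uniq_wl.
  move=> j Hj.
  have bj : b j != 0 by apply: contraNneq Hj => E; rewrite /F E shift_0 mulr0.
  have pj : p (n - t%:Z - j) != 0 by apply: contraNneq Hj => E; rewrite /F E mul0r.
  rewrite mem_wl andbC leqNgt; apply/andP; split; first by apply: contra bj => /HNb ->.
  apply/mapP; exists (n - t%:Z - j); last by ring.
  by rewrite mem_wl leqNgt; apply: contra pj => /HNp ->.
rewrite divp_sum /evz horner_sum; apply: eq_bigr => j _.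
case: ifP => Htj; last first.
  by rewrite -/(evz _ _) gN_vanish //; lia.
have Ek : n - (absz (t%:Z + j))%:Z = n - t%:Z - j by lia.
rewrite Ek /F -divp_mulAC; last first.
  have [r ->] := Hp (n - t%:Z - j); apply: dvdp_mull.
  have Hle : n - t%:Z - j <= n by lia.
  exact: (C1' hPr Hle).
rewrite hornerM horner_shift /evz; congr (_ * _.[_]).
by rewrite -intrD; congr (_%:~R); ring.
Qed.

Lemma nonproj : ~ projectiveP a.
Proof.
move=> HP.
pose Mmod := @RModule K (Mc K) (@actMc K) (fun m m' b _ => actMc_Dl m m' b)
  (@actMc_Dr K) (@actMc_M K) (@actMc1 K).
pose Nmod := @RModule K (Ncar K) (@actN K) (fun m m' b _ => actN_Dl m m' b)
  (@actN_Dr K) (@actN_M K) (@actN1 K).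
have Hpi : is_hom (M := Mmod) (N := Nmod) piN.
  by split; [exact: piN_add | move=> m b Hb; exact: piN_hom].
have Hg : is_Phom a (N := Nmod) gN.
  by split; [move=> p q _ _; exact: gN_add | move=> p b Hp Hb; exact: gN_mul].
have [h [[hadd hmul] hlift]] := HP Mmod Nmod piN Hpi piN_surj gN Hg.
have E : mulQ (mono n (a n)) (xQ K) = mulQ (mono (n + 1) (a (n + 1))) (mono 0 (c *: ('X - 1))).
  rewrite /xQ !mono_mul shift_1 mulr1 addr0 -mul_polyC shiftM shiftC (@shift_Xm1 K n).
  by rewrite mul_polyC -scalerAr mulrC -Hc.
have := congr1 h E; rewrite !hmul; try exact: inA_const; try exact: inP_mono; try exact: inA_x.
move=> /(congr1 (fun f => f 1)) /=.
rewrite (@actMcE _ _ _ [:: 1]); [|exact: finsupp_mono|done|exact: supp_mono].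
rewrite (@actMcE _ _ _ [:: 0]); [|exact: finsupp_mono|done|exact: supp_mono].
rewrite !big_seq1 /mono eqxx subrr shift_1 mulr1 subr0 => Hw.
have := congr1 (fun f => f 0%N) (hlift _ (inP_mono a n)).
rewrite /piN /gN /= /mono Hw subr0 eqxx divpp ?ha // /evz hornerC hornerM.
rewrite (_ : shift 1 (c *: ('X - 1)) = c *: 'X); last first.
  have := @shift_Xm1 K 0; rewrite add0r => E1.
  by rewrite -mul_polyC shiftM shiftC E1 polyC0 addr0 mul_polyC.
rewrite hornerZ hornerX mulr0 mulr0 => /eqP; rewrite eq_sym oner_eq0.
done.
Qed.

End M.


Theorem lemma3p17 (K : closedFieldType) (hK : [pchar K] =i pred0)
  (a : int -> {poly K}) (ha : forall i, a i != 0)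
  (hPA : forall f, inP a f -> inA f)
  (hPr : forall f b, inP a f -> inA b -> inP a (mulQ f b)) :
  projectiveP a <->
  (forall n : int, ~ exists c : K, a n = c *: (('X + (n%:~R)%:P) * a (n + 1))).
Proof.
split.
- move=> HP n [c Hc]; exact: (nonproj ha hPr Hc HP).
- move=> hnl; exact: (proj_dir hK ha hPA hPr hnl).
Qed.
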